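(* The class of finite fields is strongly $\log$-compressible via $\Sigma_3$-formulas in the ring language $L(+,\times,0,1)$: for each $k$ there is $c_k$ such that for every finite field $\mathbb F_q$ and every $\bar a\in\mathbb F_q^k$ there is a $\Sigma_3$-formula $\phi(y_1,\dots,y_k)$ with $|\phi|\le c_k\log q$ describing $(\mathbb F_q,\bar a)$.
   Context: A formula $\phi(y_1,\dots,y_k)$ describes $(M,\bar a)$ if $(M,\bar a)$ is, up to isomorphism, the unique structure with a distinguished $k$-tuple satisfying $\phi$. The length $|\phi|$ of a formula is its number of symbols, each variable counting as a single symbol. A $\Sigma_r$-formula is in prenex normal form, its quantifier prefix starting with an existential quantifier and having $r-1$ quantifier alternations. Here $\log m=\min\{r\in\mathbb N: 2^r\ge m\}$. *)

(* Defs.v *)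
From HB Require Import structures.
From mathcomp Require Import all_boot all_order all_algebra all_field.
Import GRing.Theory.
Set Implicit Arguments. Unset Strict Implicit. Unset Printing Implicit Defensive.

Inductive lterm : Type :=
| TVar : nat -> lterm
| TZero : lterm
| TOne : lterm
| TAdd : lterm -> lterm -> lterm
| TMul : lterm -> lterm -> lterm.

Inductive lform : Type :=
| FEq : lterm -> lterm -> lform
| FNot : lform -> lform
| FAnd : lform -> lform -> lform
| FOr : lform -> lform -> lform
| FEx : nat -> lform -> lform
| FAll : nat -> lform -> lform.

(* Length = number of symbols; every variable counts as one symbol.
   (Parentheses are not counted; this changes lengths only by a constant factor.) *)
Fixpoint tlen (t : lterm) : nat :=
  match t with
  | TVar _ | TZero | TOne => 1
  | TAdd t1 t2 | TMul t1 t2 => (1 + tlen t1 + tlen t2)%N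
  end.

Fixpoint flen (f : lform) : nat :=
  match f with
  | FEq t1 t2 => (1 + tlen t1 + tlen t2)%N
  | FNot g => (1 + flen g)%N
  | FAnd g h | FOr g h => (1 + flen g + flen h)%N
  | FEx _ g | FAll _ g => (2 + flen g)%N
  end.

Fixpoint tvars (t : lterm) : seq nat :=
  match t with
  | TVar n => [:: n]
  | TZero | TOne => [::]
  | TAdd t1 t2 | TMul t1 t2 => tvars t1 ++ tvars t2
  end.

Fixpoint fvars (f : lform) : seq nat :=
  match f with
  | FEq t1 t2 => tvars t1 ++ tvars t2
  | FNot g => fvars g
  | FAnd g h | FOr g h => fvars g ++ fvars h
  | FEx x g | FAll x g => filter (fun y => y != x) (fvars g)
  end.

Fixpoint qfree (f : lform) : bool :=
  match f with
  | FEq _ _ => true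
  | FNot g => qfree g
  | FAnd g h | FOr g h => qfree g && qfree h
  | FEx _ _ | FAll _ _ => false
  end.

Fixpoint qprefix (f : lform) : seq bool :=
  match f with
  | FEx _ g => true :: qprefix g
  | FAll _ g => false :: qprefix g
  | _ => [::]
  end.

Fixpoint qmatrix (f : lform) : lform :=
  match f with
  | FEx _ g | FAll _ g => qmatrix g
  | _ => f
  end.

Fixpoint alternations (s : seq bool) : nat :=
  match s with
  | b :: ((c :: _) as s') => ((b != c) + alternations s')%N
  | _ => 0
  end.

Definition is_sigma (r : nat) (f : lform) : bool :=
  [&& qfree (qmatrix f), head false (qprefix f), 0 < r
    & alternations (qprefix f) == r.-1].

Record Lstr : Type := LStr {
  carrier :> Type;
  szero : carrier;
  sone : carrier;
  sadd : carrier -> carrier -> carrier;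
  smul : carrier -> carrier -> carrier }.

Fixpoint teval (M : Lstr) (e : nat -> M) (t : lterm) : M :=
  match t with
  | TVar n => e n
  | TZero => szero M
  | TOne => sone M
  | TAdd t1 t2 => sadd (teval e t1) (teval e t2)
  | TMul t1 t2 => smul (teval e t1) (teval e t2)
  end.

Definition upd (M : Type) (e : nat -> M) (x : nat) (m : M) : nat -> M :=
  fun y => if y == x then m else e y.

Fixpoint holds (M : Lstr) (e : nat -> M) (f : lform) : Prop :=
  match f with
  | FEq t1 t2 => teval e t1 = teval e t2
  | FNot g => ~ holds e g
  | FAnd g h => holds e g /\ holds e h
  | FOr g h => holds e g \/ holds e h
  | FEx x g => exists m : M, holds (upd e x m) g
  | FAll x g => forall m : M, holds (upd e x m) g
  end.

(* (M, a) |= phi(y_1..y_k), the variable y_(i+1) being variable number i. *)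
Definition sat (M : Lstr) (k : nat) (a : 'I_k -> M) (f : lform) : Prop :=
  forall e : nat -> M, (forall i : 'I_k, e i = a i) -> holds e f.

Definition iso_tuple (M N : Lstr) (k : nat) (a : 'I_k -> M) (b : 'I_k -> N) : Prop :=
  exists (h : M -> N) (g : N -> M),
    [/\ cancel h g, cancel g h,
        h (szero M) = szero N, h (sone M) = sone N &
        [/\ (forall x y, h (sadd x y) = sadd (h x) (h y)),
             (forall x y, h (smul x y) = smul (h x) (h y))
           & (forall i, h (a i) = b i)]].

Definition describes (M : Lstr) (k : nat) (a : 'I_k -> M) (f : lform) : Prop :=
  all (fun x => x < k) (fvars f) /\
  sat a f /\
  forall (N : Lstr) (b : 'I_k -> N), sat b f -> iso_tuple a b.

Definition field_str (F : finFieldType) : Lstr :=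
  @LStr F 0%R 1%R (@GRing.add F) (@GRing.mul F).

(* log m = min { r : 2^r >= m } *)
Definition log2up (m : nat) : nat := up_log 2 m.

(* Main.v *)
Require Import Defs.
From HB Require Import structures.
From Stdlib Require Import Classical ClassicalEpsilon.
From mathcomp Require Import all_boot all_order all_algebra all_field all_fingroup all_solvable.
From mathcomp Require Import boolp zify.
From Stdlib Require Import Lia.
Set Implicit Arguments. Unset Strict Implicit. Unset Printing Implicit Defensive.
Import Order.TTheory GRing.Theory Num.Theory.
Open Scope ring_scope.

Definition ev (R : comNzRingType) (x : R) (P : {poly int}) : R := (map_poly intr P).[x].
Lemma evD (R : comNzRingType) (x : R) P Q : ev x (P + Q) = ev x P + ev x Q.
Proof. by rewrite /ev rmorphD hornerD. Qed.
Lemma evM (R : comNzRingType) (x : R) P Q : ev x (P * Q) = ev x P * ev x Q.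
Proof. by rewrite /ev rmorphM hornerM. Qed.
Lemma evB (R : comNzRingType) (x : R) P Q : ev x (P - Q) = ev x P - ev x Q.
Proof. by rewrite /ev rmorphB hornerD hornerN. Qed.
Lemma ev1 (R : comNzRingType) (x : R) : ev x 1 = 1.
Proof. by rewrite /ev rmorph1 hornerC. Qed.
Lemma evC (R : comNzRingType) (x : R) c : ev x c%:P = c%:~R.
Proof. by rewrite /ev map_polyC hornerC. Qed.
Lemma evX (R : comNzRingType) (x : R) : ev x 'X = x.
Proof. by rewrite /ev map_polyX hornerX. Qed.
Lemma evXn (R : comNzRingType) (x : R) n : ev x 'X^n = x ^+ n.
Proof. by rewrite /ev map_polyXn hornerXn. Qed.
Lemma evZ (R : comNzRingType) (x : R) c P : ev x (c *: P) = c%:~R * ev x P.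
Proof. by rewrite -mul_polyC evM evC. Qed.

Lemma ev_sum (R : comNzRingType) (x : R) (P : {poly int}) n :
  (size P <= n)%N -> ev x P = \sum_(i < n) (P`_i)%:~R * x ^+ i.
Proof.
move=> hs; rewrite /ev (horner_coef_wide _ (n:=n)); last by rewrite (leq_trans _ hs) // map_polyE (leq_trans (size_Poly _)) ?size_map.
by apply: eq_bigr => i _; rewrite coef_map.
Qed.

Lemma intr_dvd0 (R : comNzRingType) (p : nat) (c : int) :
  (p%:R : R) = 0 -> (p%:Z %| c)%Z -> (c%:~R : R) = 0.
Proof.
move=> hp /dvdzP [q ->]; rewrite intrM; have -> : ((p%:Z)%:~R : R) = p%:R by []. by rewrite hp mulr0.
Qed.

Lemma ev_dvd0 (R : comNzRingType) (p : nat) (x : R) (P : {poly int}) :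
  (p%:R : R) = 0 -> (forall i, (p%:Z %| P`_i)%Z) -> ev x P = 0.
Proof.
move=> hp hd; rewrite (ev_sum x (leqnn _)) big1 // => i _.
by rewrite (intr_dvd0 hp (hd i)) mul0r.
Qed.

Lemma least_nat (P : nat -> Prop) :
  (exists n, P n) -> exists n, P n /\ forall m, P m -> (n <= m)%N.
Proof.
move=> [n Pn].
have H : forall k, (forall j, (j < k)%N -> ~ P j) \/ exists j, P j /\ forall m, P m -> (j <= m)%N.
  elim=> [|k [IH|IH]]; [by left | | by right].
  case: (Classical_Prop.classic (P k)) => [Pk|nPk].
    right; exists k; split => // m Pm; rewrite leqNgt; apply/negP => /IH; exact.
  left=> j; rewrite ltnS leq_eqVlt => /orP [/eqP -> //|]; exact: IH.
case: (H n.+1) => // /(_ n (ltnSn n)); by [].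
Qed.

Lemma monic_of_coef (S : {poly int}) j :
  (forall i, (j < i)%N -> S`_i = 0) -> S`_j = 1 -> S \is monic /\ size S = j.+1.
Proof.
move=> hz h1.
have hs : size S = j.+1.
  apply/eqP; rewrite eqn_leq; apply/andP; split; first by apply/leq_sizeP => i /hz.
  by rewrite ltnNge; apply/negP => /leq_sizeP /(_ j (leqnn _)); rewrite h1.
by split => //; rewrite monicE lead_coefE hs h1.
Qed.

Record pres (F : finFieldType) := Pres {
  pp : nat; pd : nat; pg : F; pm : {poly int};
  pp_prime : prime pp; pp_char : (pp%:R : F) = 0;
  pm_monic : pm \is monic; pm_size : size pm = pd.+1;
  pm_root : ev pg pm = 0;
  pmin : forall R : {poly int}, (size R <= pd)%N -> ev pg R = 0 -> forall i, (pp%:Z %| R`_i)%Z;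
  psurj : forall x : F, exists P, ev pg P = x }.

Lemma pres_exists (F : finFieldType) : exists _ : pres F, True.
Proof.
have [p pr chp] := finPcharP F.
have hp : (p%:R : F) = 0 by exact: pcharf0.
have [u hu] : exists u : {unit F}, [set: {unit F}]%G = <[u]>%G :> {set _}.
  by apply/cyclicP; apply: field_unit_group_cyclic.
set g := val u.
have surj : forall x : F, exists P, ev g P = x.
  move=> x; have [->|nx] := eqVneq x 0; first by exists 0; rewrite /ev map_poly0 horner0.
  have ux : x \is a GRing.unit by rewrite unitfE.
  have : (Sub x ux : {unit F}) \in <[u]>%g by rewrite -hu inE.
  case/cycleP => i hi; exists 'X^i; rewrite evXn /g -FinRing.val_unitX -hi //.
have q1 := card_finNzRing_gt1 F.
have Q0m : ('X * ('X^(#|F|.-1) - 1) : {poly int}) \is monic.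
  by rewrite monicMl ?monicX // monic_Xn_sub_1 // -ltnS prednK // ltnW.
have Q0r : ev g ('X * ('X^(#|F|.-1) - 1)) = 0.
  by rewrite evM evB evX evXn ev1 mulrBr mulr1 -exprS prednK ?expf_card ?subrr // ltnW.
have [n [[Q [Qm Qs Qr]] nmin]] := @least_nat (fun n => exists Q : {poly int}, [/\ Q \is monic, size Q = n & ev g Q = 0])
   (ex_intro _ (size ('X * ('X^(#|F|.-1) - 1) : {poly int})) (ex_intro _ _ (And3 Q0m erefl Q0r))).
have n0 : (0 < n)%N by rewrite -Qs size_poly_gt0 monic_neq0.
set d := n.-1.
have nd : n = d.+1 by rewrite prednK.
have key : forall j, (j <= d)%N -> forall R : {poly int}, (size R <= j)%N -> ev g R = 0 ->
    forall i, (p%:Z %| R`_i)%Z.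
  elim=> [_ R /size_poly_leq0P -> _ i|j IH jd R Rs Rr i]; first by rewrite coef0 rpred0.
  set c := R`_j.
  have Rz : forall i, (j < i)%N -> R`_i = 0 by move=> i0 hi; apply: (leq_sizeP _ _ Rs).
  have [pc|npc] := boolP (p%:Z %| c)%Z.
    set R' := R - c *: 'X^j.
    have R's : (size R' <= j)%N.
      apply/leq_sizeP => i0; rewrite leq_eqVlt => /orP [/eqP <-|hi].
        by rewrite coefB coefZ coefXn eqxx mulr1 subrr.
      by rewrite coefB coefZ coefXn Rz // gtn_eqF // mulr0 subrr.
    have R'r : ev g R' = 0 by rewrite evB evZ evXn Rr (intr_dvd0 hp pc) mul0r subrr.
    have := IH (ltnW jd) R' R's R'r i.
    have -> : R`_i = R'`_i + (c *: 'X^j)`_i by rewrite coefB subrK.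
    rewrite coefZ coefXn => h; apply: rpredD => //.
    by case: (i == j); rewrite ?mulr1 ?mulr0 ?rpred0.
  exfalso.
  have cop : coprimez p c.
    by rewrite coprimezE /= prime_coprime //; exact: npc.
  have [[a b] /= hab] := coprimezP _ _ cop.
  set S := b *: R - (b * c - 1) *: 'X^j.
  have [Sm Ss] : S \is monic /\ size S = j.+1.
    apply: monic_of_coef.
      by move=> i0 hi; rewrite coefB !coefZ coefXn Rz // gtn_eqF // !mulr0 subrr.
    by rewrite coefB !coefZ coefXn eqxx mulr1 -/c opprB addrC subrK.
  have Sr : ev g S = 0.
    rewrite evB !evZ Rr mulr0 sub0r evXn (@intr_dvd0 _ p) ?mul0r ?oppr0 //.
    have -> : b * c - 1 = - (a * p%:Z) by rewrite -hab opprD addrCA subrr addr0.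
    by rewrite rpredN dvdz_mull.
  have := nmin j.+1 (ex_intro _ S (And3 Sm Ss Sr)).
  by rewrite nd ltnNge jd.
have Qs' : size Q = d.+1 by rewrite Qs nd.
by exists (Pres pr hp Qm Qs' Qr (key d (leqnn d)) surj).
Qed.

Lemma small_dvd_eq (p a b : nat) : (a < p)%N -> (b < p)%N -> (p%:Z %| a%:Z - b%:Z)%Z -> a = b.
Proof.
move=> ha hb; rewrite dvdzE; change (`|p%:Z|%N) with p => hd.
have [hab|hab] := leqP a b.
  move: hd; rewrite distnEr // => hd.
  have hlt : (b - a < p)%N by apply: leq_ltn_trans (leq_subr a b) hb.
  have [h0|h0] := posnP (b - a).
    by move/eqP: h0; rewrite subn_eq0 => h; apply/eqP; rewrite eqn_leq hab h.
  by have := dvdn_leq h0 hd; rewrite leqNgt hlt.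
move: hd; rewrite distnEl ?(ltnW hab) // => hd.
have hlt : (a - b < p)%N by apply: leq_ltn_trans (leq_subr b a) ha.
have [h0|h0] := posnP (a - b).
  by move/eqP: h0; rewrite subn_eq0 leqNgt hab.
by have := dvdn_leq h0 hd; rewrite leqNgt hlt.
Qed.

Definition redp (p : nat) (P : {poly int}) : {poly int} := \poly_(i < size P) ((P`_i %% p%:Z)%Z).

Lemma redp_coef p (P : {poly int}) i : (redp p P)`_i = if (i < size P)%N then (P`_i %% p%:Z)%Z else 0.
Proof. by rewrite coef_poly. Qed.

Lemma redp_dvd p (P : {poly int}) i : (p%:Z %| P`_i - (redp p P)`_i)%Z.
Proof.
rewrite redp_coef; case: ifP => hi; last first.
  by rewrite (leq_sizeP _ _ (leqnn _)) ?subrr ?rpred0 // leqNgt hi.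
by rewrite -eqz_mod_dvd modz_mod.
Qed.

Lemma redp_size p (P : {poly int}) : (size (redp p P) <= size P)%N.
Proof. exact: size_poly. Qed.

Lemma redp_range p (P : {poly int}) i : (0 < p)%N -> (0 <= (redp p P)`_i) && ((redp p P)`_i < p%:Z).
Proof.
move=> p0; rewrite redp_coef; case: ifP => _; last by rewrite lexx ltz_nat.
by rewrite modz_ge0 ?ltz_pmod ?ltz_nat // eqz_nat -lt0n.
Qed.

Lemma ev_redp (R : comNzRingType) p (x : R) (P : {poly int}) : (p%:R : R) = 0 -> ev x (redp p P) = ev x P.
Proof.
move=> hp; apply/eqP; rewrite eq_sym -subr_eq0 -evB; apply/eqP.
by apply: (ev_dvd0 _ hp) => i; rewrite coefB redp_dvd.
Qed.

Definition polyc (cs : seq nat) : {poly int} := \poly_(i < size cs) (nth 0%N cs i)%:Z.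

Lemma ev_polyc (R : comNzRingType) (x : R) cs :
  ev x (polyc cs) = \sum_(i < size cs) (nth 0%N cs i)%:R * x ^+ i.
Proof.
rewrite (ev_sum x (size_poly _ _)); apply: eq_bigr => i _.
by rewrite coef_poly ltn_ord.
Qed.

Lemma pp_gt1 F (P : pres F) : (1 < pp P)%N.
Proof. exact: prime_gt1 (pp_prime P). Qed.

Definition mred F (P : pres F) := redp (pp P) (pm P).

Lemma mred_prop F (P : pres F) : mred P \is monic /\ size (mred P) = (pd P).+1.
Proof.
have p1 := pp_gt1 P.
apply: monic_of_coef => [i hi|].
  by rewrite /mred redp_coef pm_size ltnNge hi.
rewrite /mred redp_coef pm_size ltnSn.
have := pm_monic P; rewrite monicE lead_coefE pm_size /= => /eqP ->.
by rewrite modz_small // ltz_nat.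
Qed.

Lemma mred_root F (P : pres F) : ev (pg P) (mred P) = 0.
Proof. by rewrite /mred ev_redp ?pm_root ?pp_char. Qed.

Lemma rep_exists F (P : pres F) (x : F) : exists cs : seq nat,
  [/\ size cs = pd P, all (fun c => c < pp P)%N cs &
      x = \sum_(i < pd P) (nth 0%N cs i)%:R * pg P ^+ i].
Proof.
have p1 := pp_gt1 P; have [mm ms] := mred_prop P.
have [Q <-] := psurj P x.
set R := Pdiv.Ring.rmodp Q (mred P).
have Rs : (size R <= pd P)%N.
  by rewrite -ltnS -ms Pdiv.Ring.ltn_rmodp monic_neq0.
have Re : ev (pg P) R = ev (pg P) Q.
  rewrite [in RHS](Pdiv.RingMonic.rdivp_eq mm Q) evD evM mred_root mulr0 add0r //.
set R' := redp (pp P) R.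
have R's : (size R' <= pd P)%N by rewrite (leq_trans (redp_size _ _)).
have R'e : ev (pg P) R' = ev (pg P) Q by rewrite ev_redp ?pp_char.
exists (mkseq (fun i => absz (R'`_i)) (pd P)); split.
- by rewrite size_mkseq.
- apply/allP => c /mapP [i _ ->].
  have /andP [h0 h1] := @redp_range (pp P) R i (ltnW p1).
  by rewrite -ltz_nat gez0_abs.
rewrite -R'e (ev_sum _ R's); apply: eq_bigr => i _.
rewrite nth_mkseq //.
have /andP [h0 _] := @redp_range (pp P) R i (ltnW p1).
by rewrite /R' -[in LHS](gez0_abs h0).
Qed.

Lemma key_S F (P : pres F) (S : comNzRingType) (y : S) :
  ((pp P)%:R : S) = 0 -> ev y (mred P) = 0 ->
  forall Q, ev (pg P) Q = 0 -> ev y Q = 0.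
Proof.
move=> hp hm Q hQ; have [mm ms] := mred_prop P.
set R := Pdiv.Ring.rmodp Q (mred P).
have Rs : (size R <= pd P)%N.
  by rewrite -ltnS -ms Pdiv.Ring.ltn_rmodp monic_neq0.
have hQe := Pdiv.RingMonic.rdivp_eq mm Q.
have Re : ev (pg P) R = 0.
  by move: hQ; rewrite {1}hQe evD evM mred_root mulr0 add0r.
rewrite hQe evD evM hm mulr0 add0r.
exact: ev_dvd0 hp (pmin Rs Re).
Qed.

Lemma hom_exists F (P : pres F) (S : comNzRingType) (y : S) :
  ((pp P)%:R : S) = 0 -> ev y (mred P) = 0 ->
  exists h : F -> S, [/\ injective h, (forall a b, h (a + b) = h a + h b),
     (forall a b, h (a * b) = h a * h b), h 1 = 1 & forall Q, h (ev (pg P) Q) = ev y Q].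
Proof.
move=> hp hm.
have hs : forall x : F, {Q | ev (pg P) Q = x}.
  by move=> x; apply: constructive_indefinite_description; apply: psurj.
pose h x := ev y (sval (hs x)).
have hE : forall Q, h (ev (pg P) Q) = ev y Q.
  move=> Q; rewrite /h; case: (hs _) => Q' /= e.
  apply/eqP; rewrite -subr_eq0 -evB; apply/eqP; apply: (key_S hp hm).
  by rewrite evB e subrr.
have hD : forall a b, h (a + b) = h a + h b.
  move=> a b; have [A <-] := psurj P a; have [B <-] := psurj P b.
  by rewrite -evD !hE evD.
have hM : forall a b, h (a * b) = h a * h b.
  move=> a b; have [A <-] := psurj P a; have [B <-] := psurj P b.
  by rewrite -evM !hE evM.
have h1 : h 1 = 1 by rewrite -(ev1 (pg P)) hE ev1.
exists h; split => //.
move=> a b hab; apply/eqP; rewrite -subr_eq0; apply/negPn/negP => nz.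
have h0 : h (a - b) = 0.
  have := hD (a - b) b; rewrite subrK hab => e.
  by have := congr1 (fun t => t - h b) e; rewrite /= subrr addrK.
have := hM (a - b) (a - b)^-1; rewrite mulfV // h0 mul0r h1 => /eqP.
by rewrite oner_eq0.
Qed.

Lemma card_bound F (P : pres F) : (pp P ^ pd P <= #|F|)%N.
Proof.
pose f (phi : {ffun 'I_(pd P) -> 'I_(pp P)}) : F :=
  ev (pg P) (\poly_(i < pd P) (if insub i is Some j then nat_of_ord (phi j) else 0%N)%:Z).
have finj : injective f.
  move=> phi psi e; apply/ffunP => i; apply/val_inj.
  have := e; move/eqP; rewrite -subr_eq0 -evB => /eqP h0.
  have := pmin _ h0 i; rewrite (leq_trans (size_polyD _ _)) ?size_polyN ?geq_max ?size_poly // => /(_ isT).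
  rewrite coefB !coef_poly ltn_ord valK.
  by apply: small_dvd_eq.
have := leq_card f finj.
by rewrite card_ffun !card_ord.
Qed.

Record ringAx (N : Lstr) : Prop := RingAx {
  ax_addA : forall x y z : N, sadd x (sadd y z) = sadd (sadd x y) z;
  ax_addC : forall x y : N, sadd x y = sadd y x;
  ax_add0 : forall x : N, sadd (szero N) x = x;
  ax_neg : forall x : N, exists w, sadd w x = szero N;
  ax_mulA : forall x y z : N, smul x (smul y z) = smul (smul x y) z;
  ax_mulC : forall x y : N, smul x y = smul y x;
  ax_mul1 : forall x : N, smul (sone N) x = x;
  ax_mulD : forall x y z : N, smul (sadd x y) z = sadd (smul x z) (smul y z);
  ax_10 : sone N <> szero N }.

Definition carN (N : Lstr) (H : ringAx N) : Type := carrier N.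
HB.instance Definition _ N H := gen_eqMixin (@carN N H).
HB.instance Definition _ N H := gen_choiceMixin (@carN N H).
Definition negN N (H : ringAx N) (x : carN H) : carN H :=
  proj1_sig (cid (ax_neg H x)).
Lemma negNP N (H : ringAx N) (x : carN H) : sadd (negN x) x = szero N.
Proof. exact: proj2_sig (cid (ax_neg H x)). Qed.
HB.instance Definition _ N H := GRing.isZmodule.Build (@carN N H)
  (@ax_addA N H : @associative (carN H) (@sadd N))
  (@ax_addC N H : @commutative (carN H) _ (@sadd N))
  (@ax_add0 N H : @left_id (carN H) _ (szero N) (@sadd N))
  (@negNP N H : @left_inverse (carN H) _ _ (szero N) (@negN N H) (@sadd N)).
Lemma ax_10b N (H : ringAx N) : (sone N : carN H) != szero N.
Proof. by apply/eqP; exact: ax_10 H. Qed.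
HB.instance Definition _ N H := GRing.Zmodule_isComNzRing.Build (@carN N H)
  (@ax_mulA N H : @associative (carN H) (@smul N))
  (@ax_mulC N H : @commutative (carN H) _ (@smul N))
  (@ax_mul1 N H : @left_id (carN H) _ (sone N) (@smul N))
  (@ax_mulD N H : @left_distributive (carN H) _ (@smul N) (@sadd N)) (@ax_10b N H).

Lemma carN_add N (H : ringAx N) (x y : carN H) : x + y = sadd x y.
Proof. by []. Qed.
Lemma carN_mul N (H : ringAx N) (x y : carN H) : x * y = smul x y.
Proof. by []. Qed.
Lemma carN_0 N (H : ringAx N) : (0 : carN H) = szero N.
Proof. by []. Qed.
Lemma carN_1 N (H : ringAx N) : (1 : carN H) = sone N.
Proof. by []. Qed.

Fixpoint rv (R : comNzRingType) (e : nat -> R) (t : lterm) : R :=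
  match t with
  | TVar n => e n
  | TZero => 0
  | TOne => 1
  | TAdd t1 t2 => rv e t1 + rv e t2
  | TMul t1 t2 => rv e t1 * rv e t2
  end.

Lemma teval_hom (M : Lstr) (R : comNzRingType) (f : M -> R) :
  f (szero M) = 0 -> f (sone M) = 1 ->
  (forall x y, f (sadd x y) = f x + f y) -> (forall x y, f (smul x y) = f x * f y) ->
  forall e t, f (teval e t) = rv (fun n => f (e n)) t.
Proof.
move=> h0 h1 hD hM e; elim=> //= [t1 IH1 t2 IH2|t1 IH1 t2 IH2].
  by rewrite hD IH1 IH2.
by rewrite hM IH1 IH2.
Qed.

Lemma teval_field (F : finFieldType) (e : nat -> field_str F) t :
  teval e t = rv (e : nat -> F) t.
Proof. by elim: t => //= [t1 -> t2 ->|t1 -> t2 ->]. Qed.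

Definition two := TAdd TOne TOne.

Fixpoint hb (b : lterm) (ts : seq lterm) : lterm :=
  match ts with
  | [::] => TZero
  | t :: ts' => TAdd t (TMul b (hb b ts'))
  end.

Lemma rv_hb (R : comNzRingType) (e : nat -> R) b ts :
  rv e (hb b ts) = \sum_(i < size ts) rv e (nth TZero ts i) * rv e b ^+ i.
Proof.
elim: ts => [|t ts IH] /=; first by rewrite big_ord0.
rewrite big_ord_recl /= expr0 mulr1 IH mulr_sumr; congr (_ + _).
by apply: eq_bigr => i _; rewrite exprS mulrCA.
Qed.

Lemma tlen_hb b ts : tlen (hb b ts) = (1 + sumn [seq tlen t + tlen b + 2 | t <- ts])%N.
Proof. elim: ts => //= t ts ->; lia. Qed.

Definition bitt (c t : nat) := if odd (c %/ 2 ^ t) then TOne else TZero.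
Definition numt (W c : nat) := hb two [seq bitt c t | t <- iota 0 W].

Lemma binexp (W c : nat) : (c < 2 ^ W)%N ->
  c = (\sum_(t < W) (odd (c %/ 2 ^ t)) * 2 ^ t)%N.
Proof.
elim: W c => [|W IH] c hc; first by move: hc; rewrite expn0 ltnS leqn0 big_ord0 => /eqP.
rewrite big_ord_recl /= expn0 divn1 muln1.
have hc2 : (c./2 < 2 ^ W)%N by rewrite -ltn_double -!muln2 -expnSr (leq_ltn_trans _ hc) // muln2 -{2}[c]odd_double_half leq_addl.
rewrite {1}[c](esym (odd_double_half c)) (IH _ hc2) -muln2 big_distrl /=; congr (_ + _)%N.
apply: eq_bigr => i _. rewrite -divn2 -divnMA /bump /= add1n expnS; lia.
Qed.

Lemma rv_numt (R : comNzRingType) (e : nat -> R) W c : (c < 2 ^ W)%N -> rv e (numt W c) = c%:R.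
Proof.
move=> hc; rewrite /numt rv_hb size_map size_iota [in RHS](binexp hc) natr_sum.
apply: eq_bigr => i _; rewrite (nth_map 0%N) ?size_iota // nth_iota // add0n natrM natrX.
by rewrite /bitt; case: odd.
Qed.

Definition coeffv k W i := hb two [seq TVar (k + 5 + (i * W + t)) | t <- iota 0 W].
Definition xrep k W d := hb (TVar k) [seq coeffv k W i | i <- iota 0 d].
Definition polyt k W cs := hb (TVar k) [seq numt W c | c <- cs].

Lemma rv_polyt (R : comNzRingType) (e : nat -> R) k W cs :
  all (fun c => c < 2 ^ W)%N cs -> rv e (polyt k W cs) = ev (e k) (polyc cs).
Proof.
move=> /allP hc; rewrite /polyt rv_hb ev_polyc size_map; apply: eq_bigr => i _.
by rewrite (nth_map 0%N) ?rv_numt ?hc ?mem_nth.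
Qed.

Lemma rv_coeffv (R : comNzRingType) (e : nat -> R) k W i (c : nat) :
  (forall t, (t < W)%N -> e (k + 5 + (i * W + t)) = (odd (c %/ 2 ^ t))%:R) ->
  (c < 2 ^ W)%N -> rv e (coeffv k W i) = c%:R.
Proof.
move=> he hc; rewrite /coeffv rv_hb size_map size_iota [in RHS](binexp hc) natr_sum.
apply: eq_bigr => t _; rewrite (nth_map 0%N) ?size_iota // nth_iota // add0n natrM natrX /=.
by rewrite he.
Qed.

Lemma rv_xrep (R : comNzRingType) (e : nat -> R) k W d :
  rv e (xrep k W d) = \sum_(i < d) rv e (coeffv k W i) * e k ^+ i.
Proof.
rewrite /xrep rv_hb size_map size_iota; apply: eq_bigr => i _.
by rewrite (nth_map 0%N) ?size_iota // nth_iota.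
Qed.

Definition bigAnd (fs : seq lform) := foldr FAnd (FEq TZero TZero) fs.

Fixpoint allh (M : Lstr) (e : nat -> M) (fs : seq lform) : Prop :=
  match fs with [::] => True | f :: fs' => holds e f /\ allh e fs' end.

Lemma holds_bigAnd (M : Lstr) (e : nat -> M) fs : holds e (bigAnd fs) <-> allh e fs.
Proof. elim: fs => //= f fs ->; tauto. Qed.

Lemma allh_cat (M : Lstr) (e : nat -> M) fs gs : allh e (fs ++ gs) <-> allh e fs /\ allh e gs.
Proof. elim: fs => //= [|f fs ->]; tauto. Qed.

Lemma allh_map (M : Lstr) (e : nat -> M) (g : nat -> lform) s :
  allh e [seq g n | n <- s] <-> forall n, n \in s -> holds e (g n).
Proof.
elim: s => [|a s IH] /=; first by split.
split; first by move=> [ha /IH hs] n; rewrite inE => /orP [/eqP ->|]; auto.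
move=> h; split; first by apply: h; rewrite inE eqxx.
by apply/IH => n hn; apply: h; rewrite inE hn orbT.
Qed.

Definition axioms k :=
  let x := TVar (k + 1) in let y := TVar (k + 2) in let z := TVar (k + 3) in
  let w := TVar (k + 4) in
  [:: FEq (TAdd x (TAdd y z)) (TAdd (TAdd x y) z);
      FEq (TAdd x y) (TAdd y x);
      FEq (TAdd TZero x) x;
      FEq (TAdd w x) TZero;
      FEq (TMul x (TMul y z)) (TMul (TMul x y) z);
      FEq (TMul x y) (TMul y x);
      FEq (TMul TOne x) x;
      FEq (TMul (TAdd x y) z) (TAdd (TMul x z) (TMul y z));
      FNot (FEq TOne TZero)].

Definition Mtx k W d p (mcs : seq nat) (acs : nat -> seq nat) :=
  bigAnd (axioms k ++
    [:: FEq (numt W p) TZero; FEq (polyt k W mcs) TZero; FEq (TVar (k + 1)) (xrep k W d)] ++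
    [seq FEq (TVar j) (polyt k W (acs j)) | j <- iota 0 k] ++
    [seq FOr (FEq (TVar (k + 5 + n)) TZero) (FEq (TVar (k + 5 + n)) TOne) | n <- iota 0 (d * W)]).

Fixpoint exs (vs : seq nat) (f : lform) : lform :=
  match vs with [::] => f | v :: vs' => FEx v (exs vs' f) end.

Definition bvars k W d := [seq k + 5 + n | n <- iota 0 (d * W)].

Definition phi k W d p mcs acs :=
  FEx k (FAll (k + 1) (FAll (k + 2) (FAll (k + 3) (FEx (k + 4)
     (exs (bvars k W d) (Mtx k W d p mcs acs)))))).

Lemma holds_exs (M : Lstr) (e : nat -> M) vs f :
  holds e (exs vs f) <-> exists e' : nat -> M, (forall v, v \notin vs -> e' v = e v) /\ holds e' f.
Proof.
elim: vs e => [|v vs IH] e /=.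
  split; first by move=> h; exists e.
  by move=> [e' [he h]]; have -> : e = e' by apply: funext => v; rewrite he.
split.
  move=> [m /IH [e' [he h]]]; exists e'; split => // u; rewrite inE negb_or => /andP [uv uvs].
  by rewrite he // /upd (negbTE uv).
move=> [e' [he h]]; exists (e' v); apply/IH; exists e'; split => // u uvs.
rewrite /upd; case: eqP => [-> //|/eqP uv]; apply: he; by rewrite inE negb_or uv.
Qed.

Lemma qfree_bigAnd fs : all qfree fs -> qfree (bigAnd fs).
Proof. by elim: fs => //= f fs IH /andP [-> /IH]. Qed.

Lemma qprefix_exs vs f : qprefix (exs vs f) = nseq (size vs) true ++ qprefix f.
Proof. by elim: vs => //= v vs ->. Qed.

Lemma qmatrix_exs vs f : qmatrix (exs vs f) = qmatrix f.
Proof. by elim: vs. Qed.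

Lemma alt_true n : alternations (true :: nseq n true) = 0%N.
Proof. by elim: n => //= n ->. Qed.

Lemma phi_sigma k W d p mcs acs : is_sigma 3 (phi k W d p mcs acs).
Proof.
rewrite /is_sigma /phi /= qmatrix_exs qprefix_exs /= cats0.
apply/andP; split.
  have := @qfree_bigAnd ([seq FEq (TVar j) (polyt k W (acs j)) | j <- iota 0 k] ++
        [seq FOr (FEq (TVar (k + 5 + n)) TZero) (FEq (TVar (k + 5 + n)) TOne)
           | n <- iota 0 (d * W)]).
  rewrite /bigAnd => -> //; rewrite all_cat !all_map.
  by apply/andP; split; apply/allP.
case: (size (bvars k W d)) => [|n] //=; by have := alt_true n; rewrite /= => ->.
Qed.

Lemma fvars_exs vs f u : u \in fvars (exs vs f) -> (u \in fvars f) && (u \notin vs).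
Proof.
elim: vs => [|v vs IH] /=; first by move=> ->.
by rewrite mem_filter => /andP [uv /IH /andP [-> uvs]]; rewrite inE negb_or uv uvs.
Qed.

Definition allv (P : pred nat) (t : lterm) := all P (tvars t).

Lemma allv_hb P b ts : allv P b -> all (allv P) ts -> allv P (hb b ts).
Proof.
rewrite /allv; move=> hb0; elim: ts => //= t ts IH /andP [ht hts].
by rewrite !all_cat ht hb0 IH.
Qed.

Lemma allv_numt P W c : allv P (numt W c).
Proof. apply: allv_hb => //; rewrite all_map; apply/allP => t _ /=; by rewrite /bitt /allv; case: odd. Qed.

Lemma fvars_bigAnd P fs : all (fun f => all P (fvars f)) fs -> all P (fvars (bigAnd fs)).
Proof. by elim: fs => //= f fs IH /andP [h1 /IH h2]; rewrite all_cat h1. Qed.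

Lemma lt_idx i t d W : (i < d)%N -> (t < W)%N -> (i * W + t < d * W)%N.
Proof.
move=> hi ht; apply: (leq_trans (n := i * W + W)); first by rewrite ltn_add2l.
have : (i.+1 * W <= d * W)%N by rewrite leq_mul2r hi orbT.
by rewrite mulSn addnC.
Qed.

Lemma phi_fvars k W d p mcs acs : all (fun x => x < k)%N (fvars (phi k W d p mcs acs)).
Proof.
set B := (k + 5 + d * W)%N.
have hM : all (fun x => x < B)%N (fvars (Mtx k W d p mcs acs)).
  apply: fvars_bigAnd; rewrite !all_cat !all_map /=.
  have hk : (k < B)%N by rewrite /B; lia.
  have hpol : forall cs, all (fun x => x < B)%N (tvars (polyt k W cs)).
    move=> cs; apply: allv_hb; first by rewrite /allv /= hk.
    by rewrite all_map; apply/allP => c _ /=; apply: allv_numt.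
  apply/andP; split; first by rewrite /B; apply/andP; split; lia.
  apply/andP; split.
    have hn := allv_numt (fun x => x < B)%N W p; rewrite /allv in hn.
    rewrite /= !cats0 hn hpol /= andbT; apply/andP; split; first by rewrite /B; lia.
    apply: allv_hb; first by rewrite /allv /= hk.
    rewrite all_map; apply/allP => i; rewrite mem_iota add0n => hi /=.
    apply: allv_hb => //; rewrite all_map; apply/allP => t; rewrite mem_iota add0n => ht /=.
    rewrite /allv /= andbT /B; have := lt_idx ht ; move=> _; have := lt_idx hi ht; lia.
  apply/andP; split.
    apply/allP => j; rewrite mem_iota add0n => hj /=.
    by rewrite hpol andbT /B; lia.
  apply/allP => n; rewrite mem_iota add0n => hn /=; rewrite /B; apply/andP; split; lia.
apply/allP => u /=.
rewrite !mem_filter => /andP [u0 /andP [u1 /andP [u2 /andP [u3 /andP [u4 /fvars_exs /andP [uM ub]]]]]].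
have := allP hM u uM; rewrite ltnNge; apply: contraR; rewrite -leqNgt => hku.
move: u0 u1 u2 u3 u4 ub; rewrite /bvars.
have [hu5|hu5] := leqP (k + 5) u.
  move=> _ _ _ _ _ hnot; apply/negPn/negP; rewrite -ltnNge /B => hlt.
  move/negP: hnot; apply; apply/mapP; exists (u - (k + 5))%N; last by lia.
  by rewrite mem_iota; lia.
move=> h0 h1 h2 h3 h4 _; exfalso.
have : (u == k) || (u == k + 1)%N || (u == k + 2)%N || (u == k + 3)%N || (u == k + 4)%N by lia.
by rewrite (negbTE h0) (negbTE h1) (negbTE h2) (negbTE h3) (negbTE h4).
Qed.

Lemma sumn_const (T : eqType) (f : T -> nat) s c :
  (forall x, x \in s -> f x = c) -> sumn [seq f x | x <- s] = (size s * c)%N.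
Proof.
elim: s => //= a s IH h; rewrite h ?inE ?eqxx // IH // => x hx; apply: h; by rewrite inE hx orbT.
Qed.

Lemma tlen_numt W c : tlen (numt W c) = (1 + W * 6)%N.
Proof.
rewrite /numt tlen_hb -map_comp (@sumn_const _ _ _ 6) ?size_iota // => t _ /=.
by rewrite /bitt; case: odd.
Qed.

Lemma tlen_polyt k W cs : tlen (polyt k W cs) = (1 + size cs * (W * 6 + 4))%N.
Proof.
rewrite /polyt tlen_hb -map_comp (@sumn_const _ _ _ (W * 6 + 4)) ?size_map // => t _ /=.
by rewrite tlen_numt; lia.
Qed.

Lemma tlen_coeffv k W i : tlen (coeffv k W i) = (1 + W * 6)%N.
Proof. by rewrite /coeffv tlen_hb -map_comp (@sumn_const _ _ _ 6) ?size_iota. Qed.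

Lemma tlen_xrep k W d : tlen (xrep k W d) = (1 + d * (W * 6 + 4))%N.
Proof.
rewrite /xrep tlen_hb -map_comp (@sumn_const _ _ _ (W * 6 + 4)) ?size_iota // => t _ /=.
by rewrite tlen_coeffv; lia.
Qed.

Lemma flen_bigAnd fs : flen (bigAnd fs) = (3 + sumn [seq (flen f).+1 | f <- fs])%N.
Proof. by elim: fs => //= f fs ->; lia. Qed.

Lemma flen_exs vs f : flen (exs vs f) = (2 * size vs + flen f)%N.
Proof. by elim: vs => //= v vs ->; lia. Qed.

Lemma sumn_cat s1 s2 : sumn (s1 ++ s2) = (sumn s1 + sumn s2)%N.
Proof. by elim: s1 => //= a s ->; lia. Qed.

Lemma phi_len k W d p mcs acs : size mcs = d.+1 -> (forall j, (j < k)%N -> size (acs j) = d) ->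
  (flen (phi k W d p mcs acs) <= 200 * ((k + 1) * ((d + 1) * (W + 1))))%N.
Proof.
move=> hm ha.
rewrite /phi /= flen_exs /bvars size_map size_iota /Mtx flen_bigAnd !map_cat !sumn_cat.
rewrite -!map_comp (@sumn_const _ _ _ (4 + d * (W * 6 + 4))); last first.
  by move=> j; rewrite mem_iota add0n => /andP [_ /ha hj] /=; rewrite tlen_polyt hj; lia.
rewrite (@sumn_const _ _ _ 8) ?size_iota // /= tlen_numt tlen_polyt tlen_xrep hm.
have h1 := leq0n (k * (d * W)); have h2 := leq0n (k * d); have h3 := leq0n (d * W); have h4 := leq0n (k * W); nia.
Qed.

Definition mcs F (P : pres F) := [seq absz ((mred P)`_i) | i <- iota 0 (pd P).+1].

Lemma mcs_size F (P : pres F) : size (mcs P) = (pd P).+1.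
Proof. by rewrite size_map size_iota. Qed.

Lemma polyc_mcs F (P : pres F) : polyc (mcs P) = mred P.
Proof.
have [_ ms] := mred_prop P; have p1 := pp_gt1 P.
apply/polyP => i; rewrite coef_poly mcs_size.
case: ltnP => hi; last by rewrite (leq_sizeP _ _ (eq_leq ms)).
rewrite (nth_map 0%N) ?size_iota // nth_iota // add0n.
by have /andP [h0 _] := @redp_range (pp P) (pm P) i (ltnW p1); rewrite gez0_abs.
Qed.

Lemma mcs_small F (P : pres F) : all (fun c => c < pp P)%N (mcs P).
Proof.
have p1 := pp_gt1 P.
apply/allP => c /mapP [i _ ->].
have /andP [h0 h1] := @redp_range (pp P) (pm P) i (ltnW p1).
by rewrite -ltz_nat gez0_abs.
Qed.

Definition Wof F (P : pres F) := (up_log 2 (pp P)).+1.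

Lemma small_W F (P : pres F) c : (c <= pp P)%N -> (c < 2 ^ Wof P)%N.
Proof.
move=> hc; rewrite /Wof expnS; have h := @up_logP 2 (pp P) isT.
have h2 : (0 < 2 ^ up_log 2 (pp P))%N by rewrite expn_gt0.
lia.
Qed.

Lemma upd_eq (M : Type) (e : nat -> M) x m : upd e x m x = m.
Proof. by rewrite /upd eqxx. Qed.
Lemma upd_ne (M : Type) (e : nat -> M) x m y : (y == x) = false -> upd e x m y = e y.
Proof. by rewrite /upd => ->. Qed.

Lemma sat_F F (P : pres F) k (a : 'I_k -> field_str F) (acs : nat -> seq nat) :
  (forall j : 'I_k, all (fun c => c < pp P)%N (acs j) /\ (a j : F) = ev (pg P) (polyc (acs j))) ->
  sat a (phi k (Wof P) (pd P) (pp P) (mcs P) acs).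
Proof.
move=> hacs e he /=.
set W := Wof P; set d := pd P; set p := pp P.
have W0 : (0 < W)%N by [].
exists (pg P) => mx my mz; exists (- (mx : F)); apply/holds_exs.
have [cs [css csa cse]] := rep_exists P mx.
pose bitF (n : nat) : F := (odd (nth 0%N cs (n %/ W) %/ 2 ^ (n %% W)))%:R.
set e5 := upd (upd (upd (upd (upd e k (pg P)) (k + 1) mx) (k + 2) my) (k + 3) mz) (k + 4) (- (mx : F)).
pose E (v : nat) : field_str F := if ((k + 5 <= v) && (v < k + 5 + d * W))%N then bitF (v - (k + 5))%N else e5 v.
exists E; split.
  move=> v hv; rewrite /E ifF //; apply/negP => /andP [h1 h2]; move/negP: hv; apply.
  apply/mapP; exists (v - (k + 5))%N; last by lia.
  by rewrite mem_iota; lia.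
have Eg : E k = pg P.
  rewrite /E ifF; last lia; rewrite /e5 /upd; by repeat (case: eqP => //; try lia).
have Ex : E (k + 1)%N = mx.
  rewrite /E ifF; last lia; rewrite /e5 /upd; by repeat (case: eqP => //; try lia).
have Ey : E (k + 2)%N = my.
  rewrite /E ifF; last lia; rewrite /e5 /upd; by repeat (case: eqP => //; try lia).
have Ez : E (k + 3)%N = mz.
  rewrite /E ifF; last lia; rewrite /e5 /upd; by repeat (case: eqP => //; try lia).
have Ew : E (k + 4)%N = - (mx : F).
  rewrite /E ifF; last lia; rewrite /e5 /upd; by repeat (case: eqP => //; try lia).
have Ej : forall j, (j < k)%N -> E j = e j.
  move=> j hj; rewrite /E ifF; last lia; rewrite /e5 /upd; by repeat (case: eqP => //; try lia).
have Eb : forall n, (n < d * W)%N -> E (k + 5 + n)%N = bitF n.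
  by move=> n hn; rewrite /E ifT; [congr bitF; lia | lia].
clearbody E.
apply/holds_bigAnd/allh_cat; split.
  rewrite /axioms; cbn [allh holds teval]; rewrite Ex Ey Ez Ew; cbn [field_str sadd smul szero sone].
  split; first exact: addrA. split; first exact: addrC. split; first exact: add0r.
  split; first exact: addNr. split; first exact: mulrA. split; first exact: mulrC.
  split; first exact: mul1r. split; first exact: mulrDl.
  by split => //; apply/eqP; exact: oner_neq0.
apply/allh_cat; split.
  cbn [allh holds]; rewrite !teval_field; cbn [rv]; split.
    by rewrite rv_numt ?pp_char // small_W.
  split.
    rewrite rv_polyt; first by rewrite Eg polyc_mcs mred_root.
    by apply/allP => c /(allP (mcs_small P)) hc; apply: small_W; apply: ltnW.
  split => //.
  rewrite Ex rv_xrep cse; apply: eq_bigr => i _; rewrite Eg; congr (_ * _).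
  apply/esym; apply: rv_coeffv; last by apply: small_W; apply: ltnW; apply: (allP csa); rewrite mem_nth // css.
  move=> t ht; rewrite Eb; last by apply: lt_idx.
  rewrite /bitF; congr ((odd (nth 0%N cs _ %/ 2 ^ _))%:R).
    by rewrite divnMDl // divn_small // addn0.
  by rewrite modnMDl modn_small.
apply/allh_cat; split.
  apply/allh_map => j; rewrite mem_iota add0n => /andP [_ hj].
  have [hs ha] := hacs (Ordinal hj).
  cbn [holds]; rewrite !teval_field; cbn [rv]; rewrite Ej // (he (Ordinal hj) : e j = _) ha rv_polyt ?Eg //.
  by apply/allP => c /(allP hs) hc; apply: small_W; apply: ltnW.
apply/allh_map => n; rewrite mem_iota add0n => /andP [_ hn].
cbn [holds]; rewrite !teval_field; cbn [rv]; rewrite Eb // /bitF; case: odd; [right | left] => //.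
Qed.

Lemma extract k W d p mcs acs (N : Lstr) (b : 'I_k -> N) :
  sat b (phi k W d p mcs acs) ->
  exists G : N, forall mx my mz : N, exists E : nat -> N,
    [/\ E k = G, E (k + 1)%N = mx, E (k + 2)%N = my, E (k + 3)%N = mz &
     [/\ forall j (hj : (j < k)%N), E j = b (Ordinal hj) & holds E (Mtx k W d p mcs acs)]].
Proof.
move=> hs.
pose e0 (v : nat) : N := if insub v is Some j then b j else szero N.
have he0 : forall i : 'I_k, e0 i = b i by move=> i; rewrite /e0 valK.
have [G hG] := hs e0 he0; exists G => mx my mz.
have [mw /holds_exs [E [hag hE]]] := hG mx my mz.
set e5 := upd (upd (upd (upd (upd e0 k G) (k + 1) mx) (k + 2) my) (k + 3) mz) (k + 4) mw.
have look : forall v, (v < k + 5)%N -> E v = e5 v.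
  move=> v hv; apply: hag; apply/negP => /mapP [n _ hn]; lia.
exists E; split.
- by rewrite look; [rewrite /e5 /upd; by repeat (case: eqP => //; try lia) | lia].
- by rewrite look; [rewrite /e5 /upd; by repeat (case: eqP => //; try lia) | lia].
- by rewrite look; [rewrite /e5 /upd; by repeat (case: eqP => //; try lia) | lia].
- by rewrite look; [rewrite /e5 /upd; by repeat (case: eqP => //; try lia) | lia].
split => // j hj; rewrite look; last lia.
rewrite /e5 /upd; do 5 (case: eqP => [?|_]; first lia).
by rewrite /e0 insubT.
Qed.

Lemma desc_N F (P : pres F) k (a : 'I_k -> field_str F) (acs : nat -> seq nat) :
  (forall j : 'I_k, all (fun c => c < pp P)%N (acs j) /\ (a j : F) = ev (pg P) (polyc (acs j))) ->
  forall (N : Lstr) (b : 'I_k -> N), sat b (phi k (Wof P) (pd P) (pp P) (mcs P) acs) -> iso_tuple a b.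
Proof.
move=> hacs N b hs.
set W := Wof P; set d := pd P; set p := pp P.
have [G hG] := extract hs.
have hax : ringAx N.
  split.
  - move=> x y z; have [E [_ Ex Ey Ez [_ hE]]] := hG x y z.
    move/holds_bigAnd/allh_cat: hE => [+ _]; rewrite /axioms; cbn [allh holds teval].
    by rewrite Ex Ey Ez => [[h _]].
  - move=> x y; have [E [_ Ex Ey Ez [_ hE]]] := hG x y x.
    move/holds_bigAnd/allh_cat: hE => [+ _]; rewrite /axioms; cbn [allh holds teval].
    by rewrite Ex Ey Ez => [[_ [h _]]].
  - move=> x; have [E [_ Ex Ey Ez [_ hE]]] := hG x x x.
    move/holds_bigAnd/allh_cat: hE => [+ _]; rewrite /axioms; cbn [allh holds teval].
    by rewrite Ex Ey Ez => [[_ [_ [h _]]]].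
  - move=> x; have [E [_ Ex Ey Ez [_ hE]]] := hG x x x.
    move/holds_bigAnd/allh_cat: hE => [+ _]; rewrite /axioms; cbn [allh holds teval].
    by rewrite Ex Ey Ez => [[_ [_ [_ [h _]]]]]; exists (E (k + 4)%N).
  - move=> x y z; have [E [_ Ex Ey Ez [_ hE]]] := hG x y z.
    move/holds_bigAnd/allh_cat: hE => [+ _]; rewrite /axioms; cbn [allh holds teval].
    by rewrite Ex Ey Ez => [[_ [_ [_ [_ [h _]]]]]].
  - move=> x y; have [E [_ Ex Ey Ez [_ hE]]] := hG x y x.
    move/holds_bigAnd/allh_cat: hE => [+ _]; rewrite /axioms; cbn [allh holds teval].
    by rewrite Ex Ey Ez => [[_ [_ [_ [_ [_ [h _]]]]]]].
  - move=> x; have [E [_ Ex Ey Ez [_ hE]]] := hG x x x.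
    move/holds_bigAnd/allh_cat: hE => [+ _]; rewrite /axioms; cbn [allh holds teval].
    by rewrite Ex Ey Ez => [[_ [_ [_ [_ [_ [_ [h _]]]]]]]].
  - move=> x y z; have [E [_ Ex Ey Ez [_ hE]]] := hG x y z.
    move/holds_bigAnd/allh_cat: hE => [+ _]; rewrite /axioms; cbn [allh holds teval].
    by rewrite Ex Ey Ez => [[_ [_ [_ [_ [_ [_ [_ [h _]]]]]]]]].
  - have [E [_ Ex Ey Ez [_ hE]]] := hG (szero N) (szero N) (szero N).
    move/holds_bigAnd/allh_cat: hE => [+ _]; rewrite /axioms; cbn [allh holds teval].
    by move=> [_ [_ [_ [_ [_ [_ [_ [_ [h _]]]]]]]]].
pose S := carN hax.
have tv : forall (E : nat -> N) t, (teval E t : S) = rv (fun n => (E n : S)) t.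
  by move=> E t; apply: (teval_hom (f := fun x : N => (x : S))).
have [E0 [E0g _ _ _ [E0j hE0]]] := hG (szero N) (szero N) (szero N).
move/holds_bigAnd/allh_cat: hE0 => [_ /allh_cat [+ /allh_cat [hpar _]]].
cbn [allh holds] => [[Cp [Cm _]]].
have hp : ((pp P)%:R : S) = 0.
  by move: Cp; rewrite tv rv_numt //; apply: small_W.
have hm : ev (G : S) (mred P) = 0.
  move: Cm; rewrite tv rv_polyt ?E0g ?polyc_mcs //.
  by apply/allP => c /(allP (mcs_small P)) hc; apply: small_W; apply: ltnW.
have [h [hinj hD hM h1 hEv]] := hom_exists hp hm.
have hab : forall j : 'I_k, h (a j) = b j.
  move=> j; have [hs1 ha] := hacs j.
  have := (allh_map _ _ _).1 hpar j; rewrite mem_iota add0n ltn_ord => /(_ isT).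
  cbn [holds]; rewrite !tv; cbn [rv]; rewrite rv_polyt; last first.
    by apply/allP => c /(allP hs1) hc; apply: small_W; apply: ltnW.
  by rewrite E0g (E0j j (ltn_ord j)) ha hEv => <-; congr (b _); apply: val_inj.
have surj : forall x : S, exists y, h y = x.
  move=> x; have [E [Eg Ex _ _ [_ hE]]] := hG x x x.
  move/holds_bigAnd/allh_cat: hE => [_ /allh_cat [+ /allh_cat [_ hbits]]].
  cbn [allh holds] => [[_ [_ [Crep _]]]].
  pose beta n := ((E (k + 5 + n)%N : S) == 1).
  have hbit : forall n, (n < d * W)%N -> (E (k + 5 + n)%N : S) = (beta n)%:R.
    move=> n hn; have := (allh_map _ _ _).1 hbits n; rewrite mem_iota add0n hn => /(_ isT).
    cbn [holds teval] => - [He|He]; rewrite /beta He.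
      by have -> : ((szero N : S) == 1) = false by apply/negbTE; rewrite eq_sym; exact: oner_neq0.
    by rewrite eqxx.
  pose c i := (\sum_(t < W) beta (i * W + t) * 2 ^ t)%N.
  exists (ev (pg P) (polyc (mkseq c d))); rewrite hEv ev_polyc size_mkseq.
  move: Crep; cbn [teval]; rewrite Ex !tv rv_xrep Eg => ->; apply: eq_bigr => i _; rewrite nth_mkseq //.
  congr (_ * _); rewrite /coeffv rv_hb size_map size_iota /c natr_sum; apply: eq_bigr => t _.
  rewrite (nth_map 0%N) ?size_iota // nth_iota // add0n; cbn [rv].
  by rewrite hbit ?natrM ?natrX //; apply: lt_idx.
have [g hg] : exists g : S -> F, forall x, h (g x) = x.
  by exists (fun x => proj1_sig (cid (surj x))) => x; exact: proj2_sig (cid (surj x)).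
have h0 : h 0 = 0.
  by have := congr1 (fun t => t - h 0) (hD 0 0); rewrite addr0 subrr addrK => /esym.
exists h, g; split => //.
- by move=> y; apply: hinj; rewrite hg.
Qed.

Lemma pd_gt0 F (P : pres F) : (0 < pd P)%N.
Proof.
case E: (pd P) => [|//]; have [mm ms] := mred_prop P; rewrite E in ms.
have := mred_root P; rewrite (ev_sum _ (eq_leq ms)) big_ord1 expr0 mulr1.
have := mm; rewrite monicE lead_coefE ms /= => /eqP ->.
by move/eqP; rewrite oner_eq0.
Qed.

Lemma len_bound F (P : pres F) :
  ((pd P + 1) * (Wof P + 1) <= 12 * log2up #|F|)%N.
Proof.
have p1 := pp_gt1 P; have d1 := pd_gt0 P; have cb := card_bound P.
rewrite /Wof /log2up.
set B := up_log 2 (pp P); set L := up_log 2 #|F|; set d := pd P.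
have B1 : (0 < B)%N by rewrite /B up_log_gt0 p1.
have hB : (2 ^ B.-1 < pp P)%N by apply: up_log_gtn.
have hL : (#|F| <= 2 ^ L)%N by apply: up_logP.
have h1 : (B.-1 * d <= L)%N.
  rewrite -(leq_exp2l _ _ (isT : (1 < 2)%N)) expnM (leq_trans _ hL) //.
  by rewrite (leq_trans _ cb) // leq_exp2r // ltnW.
have h2 : (d <= L)%N.
  rewrite -(leq_exp2l _ _ (isT : (1 < 2)%N)) (leq_trans _ hL) //.
  by rewrite (leq_trans _ cb) // leq_exp2r.
have hB' : B = B.-1.+1 by rewrite prednK.
move: h1; rewrite hB' /=; move: B.-1 => B0 h1; nia.
Qed.

Close Scope ring_scope.

Theorem corollary4p2 :
  forall k : nat, exists c : nat,
    forall (F : finFieldType) (a : 'I_k -> field_str F),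
      exists phi : lform,
        is_sigma 3 phi /\
        flen phi <= c * log2up #|F| /\
        describes a phi.
Proof.
move=> k; exists (2400 * (k + 1))%N => F a.
have [P _] := pres_exists F.
have hrep : forall j : 'I_k, exists cs : seq nat,
    [/\ size cs = pd P, all (fun c => c < pp P)%N cs & (a j : F) = ev (pg P) (polyc cs)].
  move=> j; have [cs [hs ha he]] := rep_exists P (a j); exists cs; split => //.
  by rewrite ev_polyc hs.
pose acs0 (j : 'I_k) := proj1_sig (cid (hrep j)).
have hacs0 : forall j, [/\ size (acs0 j) = pd P, all (fun c => c < pp P)%N (acs0 j)
    & (a j : F) = ev (pg P) (polyc (acs0 j))].
  by move=> j; exact: proj2_sig (cid (hrep j)).
pose acs (n : nat) : seq nat := if insub n is Some j then acs0 j else [::].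
have hacs : forall j : 'I_k, acs j = acs0 j by move=> j; rewrite /acs valK.
have hac : forall j : 'I_k, all (fun c => c < pp P)%N (acs j) /\ (a j : F) = ev (pg P) (polyc (acs j)).
  by move=> j; rewrite hacs; have [_ ? ?] := hacs0 j.
exists (phi k (Wof P) (pd P) (pp P) (mcs P) acs); split; first exact: phi_sigma.
split.
  have hl := @phi_len k (Wof P) (pd P) (pp P) (mcs P) acs (mcs_size P).
  have hsz : forall j, (j < k)%N -> size (acs j) = pd P.
    by move=> j hj; have := hacs (Ordinal hj); rewrite /= => ->; have [] := hacs0 (Ordinal hj).
  have h := hl hsz; apply: (leq_trans h).
  have hb := len_bound P.
  have -> : (2400 * (k + 1) * log2up #|F| = 200 * ((k + 1) * (12 * log2up #|F|)))%N by lia.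
  by rewrite leq_mul2l /= leq_mul2l hb orbT.
split; first exact: phi_fvars.
split; first exact: sat_F.
exact: desc_N.
Qed.
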